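(* Let $S_X,S_Y$ be finite nonempty action sets, $\varphi:S_X\times S_Y\to\mathbb{R}$, and $\lambda\in[0,1)$. There exists a $(\varphi,\lambda)$-autocratic behavioral strategy for $X$ if and only if $\Phi_X^+\neq\emptyset$, $\Phi_X^-\neq\emptyset$, and either (i) $\Phi_X^+\cap\Phi_X^-\neq\emptyset$, or (ii) $\Phi_X^+\cap\Phi_X^-=\emptyset$ and $\lambda\ge\lambda_{\min}$, where $$\lambda_{\min}=1-\sup_{(\tau_X^+,\tau_X^-)\in\Phi_X^+\times\Phi_X^-}\frac{\min_{s_Y}\varphi(\tau_X^+,s_Y)-\max_{s_Y}\varphi(\tau_X^-,s_Y)}{\max\{\max_{s_Y}\varphi(\tau_X^+,s_Y)-\max_{s_Y}\varphi(\tau_X^-,s_Y),\ \min_{s_Y}\varphi(\tau_X^+,s_Y)-\min_{s_Y}\varphi(\tau_X^-,s_Y)\}},$$ all maxima and minima over $s_Y$ being taken over $S_Y$.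
   Context: Two players $X,Y$ play a repeated game with finite action sets $S_X,S_Y$; $\Delta(S)$ denotes the probability distributions on $S$. $\varphi$ is extended to mixed actions in its first argument by $\varphi(\tau_X,s_Y)=\mathbb{E}_{s_X\sim\tau_X}[\varphi(s_X,s_Y)]$. Histories: $\mathcal{H}=\bigcup_{T\ge0}(S_X\times S_Y)^T$. A behavioral strategy for $X$ is a map $\sigma_X:\mathcal{H}\to\Delta(S_X)$, similarly for $Y$; in each round $t$ players independently draw actions from their strategies evaluated at the history of realized action pairs of rounds $0,\dots,t-1$, and $\mathbb{E}_{\sigma_X,\sigma_Y}$ is the expectation over the resulting play. For $\lambda\in[0,1)$, $\sigma_X$ is $(\varphi,\lambda)$-autocratic if for every behavioral strategy $\sigma_Y$ of $Y$, $\mathbb{E}_{\sigma_X,\sigma_Y}\big[(1-\lambda)\sum_{t\ge0}\lambda^t\varphi(s_X^t,s_Y^t)\big]=0$. Define $\Phi_X^+=\{\tau_X\in\Delta(S_X):\min_{s_Y\in S_Y}\varphi(\tau_X,s_Y)\ge0\}$ and $\Phi_X^-=\{\tau_X\in\Delta(S_X):\max_{s_Y\in S_Y}\varphi(\tau_X,s_Y)\le0\}$. *)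

(* Defs.v *)
From HB Require Import structures.
From mathcomp Require Import all_boot all_order all_algebra.
From mathcomp Require Import all_classical all_reals all_analysis.
Set Implicit Arguments. Unset Strict Implicit. Unset Printing Implicit Defensive.
Import Order.TTheory GRing.Theory Num.Theory.
Import numFieldNormedType.Exports.
Local Open Scope ring_scope.
Local Open Scope classical_set_scope.

Section Game.
Variables (R : realType) (SX SY : finType).

Definition is_dist (S : finType) (tau : {ffun S -> R}) : Prop :=
  (forall s, 0 <= tau s) /\ \sum_(s : S) tau s = 1.

(* histories: sequences of realized action pairs, in chronological order *)
Definition history := seq (SX * SY)%type.

Definition stratX := history -> {ffun SX -> R}.
Definition stratY := history -> {ffun SY -> R}.
Definition behavioralX (sX : stratX) : Prop := forall h, is_dist (sX h).
Definition behavioralY (sY : stratY) : Prop := forall h, is_dist (sY h).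

Variable phi : SX -> SY -> R.

Definition hist_prob (sX : stratX) (sY : stratY) (t : nat)
    (h : t.-tuple (SX * SY)%type) : R :=
  \prod_(i < t) (sX (take i h) (tnth h i).1 * sY (take i h) (tnth h i).2).

Definition stage_payoff (sX : stratX) (sY : stratY) (t : nat) : R :=
  \sum_(h : t.-tuple (SX * SY)%type)
     hist_prob sX sY h *
     (\sum_(x : SX) \sum_(y : SY) sX h x * sY h y * phi x y).

Definition disc_partial (lam : R) (sX : stratX) (sY : stratY) (n : nat) : R :=
  \sum_(t < n) (1 - lam) * lam ^+ t * stage_payoff sX sY t.

Definition autocratic (lam : R) (sX : stratX) : Prop :=
  forall sY : stratY, behavioralY sY ->
    disc_partial lam sX sY @ \oo --> (0 : R).

Definition phiE (tau : {ffun SX -> R}) (y : SY) : R :=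
  \sum_(x : SX) tau x * phi x y.

(* max / min over S_Y (S_Y is assumed nonempty) *)
Definition maxY (tau : {ffun SX -> R}) : R :=
  match [pick y : SY] with
  | Some y0 => \big[Num.max/phiE tau y0]_(y : SY) phiE tau y
  | None => 0 end.
Definition minY (tau : {ffun SX -> R}) : R :=
  match [pick y : SY] with
  | Some y0 => \big[Num.min/phiE tau y0]_(y : SY) phiE tau y
  | None => 0 end.

Definition PhiPlus (tau : {ffun SX -> R}) : Prop := is_dist tau /\ 0 <= minY tau.
Definition PhiMinus (tau : {ffun SX -> R}) : Prop := is_dist tau /\ maxY tau <= 0.

Definition ratio (tp tm : {ffun SX -> R}) : R :=
  (minY tp - maxY tm) / Num.max (maxY tp - maxY tm) (minY tp - minY tm).

Definition lambda_min : R :=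
  1 - sup [set r : R | exists tp tm, PhiPlus tp /\ PhiMinus tm /\ r = ratio tp tm].

End Game.

(* Main.v *)
Require Import Defs.
From HB Require Import structures.
From mathcomp Require Import all_boot all_order all_algebra.
From mathcomp Require Import all_classical all_reals all_analysis.
From mathcomp Require Import ring lra.
Import Order.TTheory GRing.Theory Num.Theory.
Local Open Scope ring_scope.

Section Helpers.
Set Implicit Arguments. Unset Strict Implicit. Unset Printing Implicit Defensive.
Import numFieldNormedType.Exports.
Local Open Scope classical_set_scope.

Section Basics.
Variables (R : realType) (SX SY : finType) (phi : SX -> SY -> R).

Definition shX (s : stratX R SX SY) (p : (SX * SY)%type) : stratX R SX SY :=
  fun h => s (p :: h).
Definition shY (s : stratY R SX SY) (p : (SX * SY)%type) : stratY R SX SY :=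
  fun h => s (p :: h).
Definition g0 (tau : {ffun SX -> R}) (sig : {ffun SY -> R}) : R :=
  \sum_(x : SX) \sum_(y : SY) tau x * sig y * phi x y.

Lemma sum_tuple_cons (T : finType) t (f : t.+1.-tuple T -> R) :
  \sum_(h : t.+1.-tuple T) f h =
  \sum_(p : T) \sum_(h : t.-tuple T) f [tuple of p :: h].
Proof.
rewrite pair_big /=.
rewrite (reindex (fun ph : T * t.-tuple T => [tuple of ph.1 :: ph.2])) //=.
exists (fun h : t.+1.-tuple T => (thead h, [tuple of behead h])) => [[a b] _|h _] /=.
  by rewrite theadE; congr pair; apply: val_inj.
by rewrite [RHS]tuple_eta.
Qed.

Lemma hist_prob_cons (sX : stratX R SX SY) (sY : stratY R SX SY) t p
   (h : t.-tuple (SX * SY)%type) :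
  hist_prob sX sY [tuple of p :: h] =
  sX [::] p.1 * sY [::] p.2 * hist_prob (shX sX p) (shY sY p) h.
Proof.
rewrite /hist_prob big_ord_recl /= tnth0; congr (_ * _).
apply: eq_bigr => i _; rewrite tnthS.
by [].
Qed.

Lemma stage0 (sX : stratX R SX SY) (sY : stratY R SX SY) :
  stage_payoff phi sX sY 0 = g0 (sX [::]) (sY [::]).
Proof.
rewrite /stage_payoff (big_pred1 [tuple]) /=; last by move=> h; rewrite [h]tuple0; apply/esym/eqP.
by rewrite /hist_prob big_ord0 mul1r.
Qed.

Lemma stageS (sX : stratX R SX SY) (sY : stratY R SX SY) t :
  stage_payoff phi sX sY t.+1 =
  \sum_(p : SX * SY) sX [::] p.1 * sY [::] p.2 *
     stage_payoff phi (shX sX p) (shY sY p) t.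
Proof.
rewrite /stage_payoff sum_tuple_cons; apply: eq_bigr => p _.
rewrite mulr_sumr; apply: eq_bigr => h _.
by rewrite hist_prob_cons mulrA.
Qed.

End Basics.


Section Disc.
Variables (R : realType) (SX SY : finType) (phi : SX -> SY -> R) (lam : R).
Hypotheses (hl0 : 0 <= lam) (hl1 : lam < 1).

Definition Kb : R := \sum_(x : SX) \sum_(y : SY) `|phi x y|.

Lemma discS (sX : stratX R SX SY) (sY : stratY R SX SY) n :
  disc_partial phi lam sX sY n.+1 =
  (1 - lam) * g0 phi (sX [::]) (sY [::]) +
  lam * \sum_(p : SX * SY) sX [::] p.1 * sY [::] p.2 *
     disc_partial phi lam (shX sX p) (shY sY p) n.
Proof.
rewrite /disc_partial big_ord_recl expr0 mulr1 stage0; congr (_ + _).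
rewrite mulr_sumr; under [RHS]eq_bigr do rewrite mulr_sumr mulr_sumr.
rewrite exchange_big /=; apply: eq_bigr => i _.
rewrite stageS mulr_sumr; apply: eq_bigr => p _.
rewrite exprS /=; ring.
Qed.

Lemma disc0 (sX : stratX R SX SY) (sY : stratY R SX SY) :
  disc_partial phi lam sX sY 0 = 0.
Proof. by rewrite /disc_partial big_ord0. Qed.

Lemma dist_le1 (S : finType) (tau : {ffun S -> R}) : is_dist tau -> forall s, tau s <= 1.
Proof.
case=> h0 h1 s; rewrite -h1 (bigD1 s) //= lerDl; exact: sumr_ge0.
Qed.

Lemma sum_w (sX : stratX R SX SY) (sY : stratY R SX SY) :
  behavioralX sX -> behavioralY sY ->
  \sum_(p : SX * SY) sX [::] p.1 * sY [::] p.2 = 1.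
Proof.
move=> bX bY; rewrite -(pair_big xpredT xpredT (fun x y => sX [::] x * sY [::] y)) /=.
under eq_bigr do rewrite -mulr_sumr (bY [::]).2 mulr1.
exact: (bX [::]).2.
Qed.

Lemma w_ge0 (sX : stratX R SX SY) (sY : stratY R SX SY) p :
  behavioralX sX -> behavioralY sY -> 0 <= sX [::] p.1 * sY [::] p.2.
Proof. by move=> bX bY; rewrite mulr_ge0 //; [apply: (bX _).1|apply: (bY _).1]. Qed.

Lemma behX_sh (sX : stratX R SX SY) p : behavioralX sX -> behavioralX (shX sX p).
Proof. by move=> b h; apply: b. Qed.
Lemma behY_sh (sY : stratY R SX SY) p : behavioralY sY -> behavioralY (shY sY p).
Proof. by move=> b h; apply: b. Qed.

Lemma g0_bound tau sig : is_dist tau -> is_dist sig -> `|g0 phi tau sig| <= Kb.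
Proof.
move=> dt ds; rewrite /g0 /Kb; apply: (le_trans (ler_norm_sum _ _ _)).
apply: ler_sum => x _; apply: (le_trans (ler_norm_sum _ _ _)).
apply: ler_sum => y _; rewrite !normrM.
rewrite -[X in _ <= X]mul1r; apply: ler_wpM2r => //.
rewrite -[1]mul1r; apply: ler_pM => //.
  by rewrite ger0_norm ?(dt.1 x) //; apply: dist_le1.
by rewrite ger0_norm ?(ds.1 y) //; apply: dist_le1.
Qed.

Lemma convex_bound (sX : stratX R SX SY) (sY : stratY R SX SY) (f : SX * SY -> R) a b :
  behavioralX sX -> behavioralY sY -> (forall p, a <= f p <= b) ->
  a <= \sum_(p : SX * SY) sX [::] p.1 * sY [::] p.2 * f p <= b.
Proof.
move=> bX bY hf; apply/andP; split.
  rewrite -[a]mul1r -(sum_w bX bY) mulr_suml; apply: ler_sum => p _.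
  by apply: ler_wpM2l; [apply: w_ge0|case/andP: (hf p)].
rewrite -[b]mul1r -(sum_w bX bY) mulr_suml; apply: ler_sum => p _.
by apply: ler_wpM2l; [apply: w_ge0|case/andP: (hf p)].
Qed.

Lemma disc_bound n : forall (sX : stratX R SX SY) (sY : stratY R SX SY),
  behavioralX sX -> behavioralY sY -> `|disc_partial phi lam sX sY n| <= Kb.
Proof.
elim: n => [|n IH] sX sY bX bY.
  rewrite disc0 normr0 /Kb; apply: sumr_ge0 => x _; apply: sumr_ge0 => y _ //.
rewrite discS.
have hg := g0_bound ((bX [::])) ((bY [::])).
have : -Kb <= \sum_(p : SX * SY) sX [::] p.1 * sY [::] p.2 *
     disc_partial phi lam (shX sX p) (shY sY p) n <= Kb.
  apply: convex_bound => // p; rewrite -ler_norml; apply: IH.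
  exact: behX_sh. exact: behY_sh.
move: hg; rewrite !ler_norml => /andP[h1 h2] /andP[h3 h4].
have l1 : 0 <= 1 - lam by rewrite subr_ge0 ltW.
set g := g0 _ _ _ in h1 h2 *; set S := \sum_(p : SX * SY) _ in h3 h4 *.
have e1 : 0 <= (1 - lam) * (g + Kb) by apply: mulr_ge0 => //; lra.
have e2 : 0 <= (1 - lam) * (Kb - g) by apply: mulr_ge0 => //; lra.
have e3 : 0 <= lam * (S + Kb) by apply: mulr_ge0 => //; lra.
have e4 : 0 <= lam * (Kb - S) by apply: mulr_ge0 => //; lra.
apply/andP; split; nra.
Qed.

Lemma geom_sum n : \sum_(t < n) (1 - lam) * lam ^+ t = 1 - lam ^+ n.
Proof.
elim: n => [|n IH]; first by rewrite big_ord0 expr0 subrr.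
rewrite big_ord_recr /= IH exprS; ring.
Qed.

Lemma disc_cvg (sX : stratX R SX SY) (sY : stratY R SX SY) :
  behavioralX sX -> behavioralY sY -> cvg (disc_partial phi lam sX sY @ \oo).
Proof.
move=> bX bY.
have sb : forall t, `|stage_payoff phi sX sY t| <= Kb.
  move=> t; elim: t sX sY bX bY => [|t IH] sX' sY' bX' bY'.
    by rewrite stage0; apply: g0_bound.
  rewrite stageS.
  have : -Kb <= \sum_(p : SX * SY) sX' [::] p.1 * sY' [::] p.2 *
     stage_payoff phi (shX sX' p) (shY sY' p) t <= Kb.
    apply: convex_bound => // p; rewrite -ler_norml; apply: IH.
    exact: behX_sh. exact: behY_sh.
  by rewrite ler_norml.
have l1 : 0 <= 1 - lam by rewrite subr_ge0 ltW.
pose u n := \sum_(t < n) (1 - lam) * lam ^+ t * (stage_payoff phi sX sY t + Kb).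
have ue : forall n, disc_partial phi lam sX sY n = u n - Kb * (1 - lam ^+ n).
  move=> n; rewrite /u /disc_partial -geom_sum mulr_sumr -sumrB.
  by apply: eq_bigr => t _; ring.
have cu : cvg (u @ \oo).
  apply/cvg_ex; exists (sup (range u)); apply: nondecreasing_cvgn.
    apply/nondecreasing_seqP => n; rewrite /u big_ord_recr /= lerDl.
    apply: mulr_ge0; first by apply: mulr_ge0 => //; apply: exprn_ge0.
    by move: (sb n); rewrite ler_norml => /andP[hh _]; lra.
  exists (Kb + Kb) => _ [n _ <-]; rewrite /u.
  apply: (@le_trans _ _ (\sum_(t < n) (1 - lam) * lam ^+ t * (Kb + Kb))).
    apply: ler_sum => t _; apply: ler_wpM2l.
      by apply: mulr_ge0 => //; apply: exprn_ge0.
    by rewrite lerD2r; move: (sb t); rewrite ler_norml => /andP[].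
  rewrite -mulr_suml geom_sum.
  have Kb0 : 0 <= Kb by apply: sumr_ge0 => x _; apply: sumr_ge0.
  have : 0 <= lam ^+ n by apply: exprn_ge0.
  nra.
have ce : (fun n => Kb * (1 - lam ^+ n)) @ \oo --> Kb * (1 - 0).
  apply: cvgM; first exact: cvg_cst.
  apply: cvgB; first exact: cvg_cst.
  by apply: cvg_expr; rewrite ger0_norm.
have -> : disc_partial phi lam sX sY = (u - (fun n => Kb * (1 - lam ^+ n)))%R.
  by apply/funext => n; rewrite ue.
apply: is_cvgB => //; exact: (cvgP _ ce).
Qed.

End Disc.


Lemma cvg_sum_seq (R : realType) (I : Type) (r : seq I) (f : I -> nat -> R) (l : I -> R) :
  (forall i, f i @ \oo --> l i) ->
  (fun n => \sum_(i <- r) f i n) @ \oo --> \sum_(i <- r) l i.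
Proof.
move=> h; elim: r => [|i r IH].
  rewrite big_nil; under eq_fun do rewrite big_nil; exact: cvg_cst.
rewrite big_cons; under eq_fun do rewrite big_cons.
exact: cvgD.
Qed.

Section Values.
Variables (R : realType) (SX SY : finType) (phi : SX -> SY -> R) (lam : R).
Hypotheses (hl0 : 0 <= lam) (hl1 : lam < 1).
Variable y0 : SY.

Definition dY (y : SY) : {ffun SY -> R} := [ffun y' => (y' == y)%:R].

Lemma dY_dist y : is_dist (dY y).
Proof.
split=> [s|]; first by rewrite ffunE ler0n.
rewrite (bigD1 y) //= ffunE eqxx big1 ?addr0 // => s /negbTE.
by rewrite ffunE => ->.
Qed.

Definition Ystar : stratY R SX SY := fun _ => dY y0.
Lemma Ystar_beh : behavioralY Ystar.
Proof. by move=> h; apply: dY_dist. Qed.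

Definition AV (s : stratX R SX SY) (c : R) :=
  forall sY, behavioralY sY -> disc_partial phi lam s sY @ \oo --> c.

Definition vl (s : stratX R SX SY) : R := lim (disc_partial phi lam s Ystar @ \oo).

Lemma val_cvg s : behavioralX s -> disc_partial phi lam s Ystar @ \oo --> vl s.
Proof. by move=> b; apply: (disc_cvg hl0 hl1 b Ystar_beh). Qed.

Lemma AV_val s c : AV s c -> vl s = c.
Proof. move=> h; have := h _ Ystar_beh. rewrite /vl. move=> H. apply: cvg_lim; [exact: Rhausdorff|exact: H]. Qed.

Lemma g0_dY tau y : g0 phi tau (dY y) = phiE phi tau y.
Proof.
rewrite /g0 /phiE; apply: eq_bigr => x _.
rewrite (bigD1 y) //= ffunE eqxx mulr1 big1 ?addr0 // => s /negbTE.
by rewrite ffunE => ->; rewrite mulr0 mul0r.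
Qed.

Lemma sum_dY (tau : {ffun SX -> R}) y (F : SX * SY -> R) :
  \sum_(p : SX * SY) tau p.1 * dY y p.2 * F p = \sum_(x : SX) tau x * F (x, y).
Proof.
transitivity (\sum_(x : SX) \sum_(y' : SY) tau x * dY y y' * F (x, y')).
  by rewrite pair_big /=; apply: eq_bigr => -[x y'] _.
apply: eq_bigr => x _.
rewrite (bigD1 y) //= ffunE eqxx mulr1 big1 ?addr0 // => s /negbTE.
by rewrite ffunE => ->; rewrite mulr0 mul0r.
Qed.

Definition Yd (y : SY) : stratY R SX SY := fun h =>
  match h with [::] => dY y | _ :: h' => Ystar h' end.

Lemma Yd_beh y : behavioralY (Yd y).
Proof. by case=> [|q h]; apply: dY_dist. Qed.

Lemma REC s c y : behavioralX s -> AV s c ->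
  c = (1 - lam) * phiE phi (s [::]) y +
      lam * \sum_(x : SX) s [::] x * vl (shX s (x, y)).
Proof.
move=> bs hc.
have h1 := hc _ (Yd_beh y).
rewrite -cvg_shiftS in h1.
have e : (fun n => disc_partial phi lam s (Yd y) n.+1) =
   (fun n => (1 - lam) * phiE phi (s [::]) y +
      lam * \sum_(x : SX) s [::] x * disc_partial phi lam (shX s (x, y)) Ystar n).
  apply/funext => n; rewrite discS g0_dY.
  by rewrite (sum_dY (s [::]) y (fun p => disc_partial phi lam (shX s p) (shY (Yd y) p) n)).
have h2 : (fun n => (1 - lam) * phiE phi (s [::]) y +
      lam * \sum_(x : SX) s [::] x * disc_partial phi lam (shX s (x, y)) Ystar n) @ \oo -->
   (1 - lam) * phiE phi (s [::]) y + lam * \sum_(x : SX) s [::] x * vl (shX s (x, y)).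
  apply: cvgD; first exact: cvg_cst.
  apply: cvgM; first exact: cvg_cst.
  refine (@cvg_sum_seq R SX _ (fun x n => s [::] x * disc_partial phi lam (shX s (x, y)) Ystar n) (fun x => s [::] x * vl (shX s (x, y))) _).
  move=> x; apply: cvgM; first exact: cvg_cst.
  by apply: val_cvg; apply: behX_sh.
rewrite /= e in h1.
exact: (cvg_unique _ h1 h2).
Qed.


Definition Yc (x0 : SX) (y1 : SY) (Z : stratY R SX SY) : stratY R SX SY := fun h =>
  match h with [::] => dY y1 | q :: h' => if q == (x0, y1) then Z h' else Ystar h' end.

Lemma Yc_beh x0 y1 Z : behavioralY Z -> behavioralY (Yc x0 y1 Z).
Proof.
move=> bZ [|q h] /=; first exact: dY_dist.
by case: ifP => _; [apply: bZ|apply: Ystar_beh].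
Qed.

Lemma Yc_decomp s x0 y1 Z n :
  disc_partial phi lam s (Yc x0 y1 Z) n.+1 =
  (1 - lam) * phiE phi (s [::]) y1 +
  lam * (s [::] x0 * disc_partial phi lam (shX s (x0, y1)) Z n +
         \sum_(x | x != x0) s [::] x * disc_partial phi lam (shX s (x, y1)) Ystar n).
Proof.
rewrite discS g0_dY.
rewrite (sum_dY (s [::]) y1 (fun p => disc_partial phi lam (shX s p) (shY (Yc x0 y1 Z) p) n)).
rewrite (bigD1 x0) //=; congr (_ + _ * (_ * _ + _)).
  by congr (disc_partial _ _ _ _ _); apply/funext => h; rewrite /shY /= eqxx.
apply: eq_bigr => x hx; congr (_ * disc_partial _ _ _ _ _).
apply/funext => h; rewrite /shY /=.
have -> : ((x, y1) == (x0, y1)) = false by rewrite xpair_eqE (negbTE hx).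
by [].
Qed.

Lemma VC s c x0 y1 : behavioralX s -> AV s c -> 0 < lam -> 0 < s [::] x0 ->
  AV (shX s (x0, y1)) (vl (shX s (x0, y1))).
Proof.
move=> bs hc lp sp Z bZ.
set k := lam * s [::] x0.
have kp : 0 < k by apply: mulr_gt0.
have e : disc_partial phi lam (shX s (x0, y1)) Z =
   (fun n => disc_partial phi lam (shX s (x0, y1)) Ystar n +
    (disc_partial phi lam s (Yc x0 y1 Z) n.+1 -
               disc_partial phi lam s (Yc x0 y1 Ystar) n.+1) / k).
  apply/funext => n; rewrite !Yc_decomp /k.
  by field; rewrite !gt_eqF.
rewrite e.
have h1 := hc _ (Yc_beh x0 y1 bZ).
have h2 := hc _ (Yc_beh x0 y1 Ystar_beh).
rewrite -cvg_shiftS in h1; rewrite -cvg_shiftS in h2.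
have h3 : (fun n => (disc_partial phi lam s (Yc x0 y1 Z) n.+1 -
               disc_partial phi lam s (Yc x0 y1 Ystar) n.+1) / k) @ \oo --> (c - c) / k.
  apply: cvgM; last exact: cvg_cst.
  exact: cvgB.
rewrite subrr mul0r in h3.
rewrite -[X in _ --> X]addr0.
apply: cvgD => //.
apply: val_cvg; exact: behX_sh.
Qed.

End Values.


Section MinMax.
Variables (R : realType) (SX SY : finType) (phi : SX -> SY -> R).
Variable y0 : SY.

Lemma pickY : exists y1, [pick y : SY] = Some y1.
Proof. by case: pickP => [y _|/(_ y0)//]; exists y. Qed.

Lemma minY_le tau y : minY phi tau <= phiE phi tau y.
Proof.
rewrite /minY; have [y1 ->] := pickY.
by rewrite (bigD1 y) //= ge_min lexx.
Qed.

Lemma maxY_ge tau y : phiE phi tau y <= maxY phi tau.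
Proof.
rewrite /maxY; have [y1 ->] := pickY.
by rewrite (bigD1 y) //= le_max lexx.
Qed.

Lemma minY_ge tau z : (forall y, z <= phiE phi tau y) -> z <= minY phi tau.
Proof.
move=> h; rewrite /minY; have [y1 ->] := pickY.
by apply: (big_ind (fun v => z <= v)) => // a b ha hb; rewrite le_min ha hb.
Qed.

Lemma maxY_le tau z : (forall y, phiE phi tau y <= z) -> maxY phi tau <= z.
Proof.
move=> h; rewrite /maxY; have [y1 ->] := pickY.
by apply: (big_ind (fun v => v <= z)) => // a b ha hb; rewrite ge_max ha hb.
Qed.

Lemma minY_ex tau : exists y, minY phi tau = phiE phi tau y.
Proof.
rewrite /minY; have [y1 ->] := pickY.
apply: (big_ind (fun v => exists y, v = phiE phi tau y)); first by exists y1.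
  by move=> a b [ya ->] [yb ->]; case: (leP (phiE phi tau ya) (phiE phi tau yb)) => _;
     [exists ya|exists yb].
by move=> y _; exists y.
Qed.

Lemma maxY_ex tau : exists y, maxY phi tau = phiE phi tau y.
Proof.
rewrite /maxY; have [y1 ->] := pickY.
apply: (big_ind (fun v => exists y, v = phiE phi tau y)); first by exists y1.
  by move=> a b [ya ->] [yb ->]; case: (leP (phiE phi tau ya) (phiE phi tau yb)) => _;
     [exists yb|exists ya].
by move=> y _; exists y.
Qed.

Lemma minY_le_maxY tau : minY phi tau <= maxY phi tau.
Proof. exact: le_trans (minY_le tau y0) (maxY_ge tau y0). Qed.

Lemma ratio_le1 tp tm : PhiPlus phi tp -> PhiMinus phi tm -> Defs.ratio phi tp tm <= 1.
Proof.
move=> [_ hp] [_ hm]; rewrite /Defs.ratio.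
set D := Num.max _ _.
have hD : minY phi tp - maxY phi tm <= D.
  by rewrite le_max lerD2r minY_le_maxY.
have h0 : 0 <= minY phi tp - maxY phi tm by lra.
case: (ltrgt0P D) => hD0.
- by rewrite ler_pdivrMr // mul1r.
- lra.
- by rewrite hD0 invr0 mulr0.
Qed.

Lemma ratio_ge0 tp tm : PhiPlus phi tp -> PhiMinus phi tm -> 0 <= Defs.ratio phi tp tm.
Proof.
move=> [_ hp] [_ hm]; rewrite /Defs.ratio.
set D := Num.max _ _.
have hD : minY phi tp - maxY phi tm <= D.
  by rewrite le_max lerD2r minY_le_maxY.
apply: divr_ge0; lra.
Qed.

End MinMax.


Section Nec.
Variables (R : realType) (SX SY : finType) (phi : SX -> SY -> R) (lam : R).
Hypotheses (hl0 : 0 <= lam) (hl1 : lam < 1).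
Variable y0 : SY.

Inductive Reach (s0 : stratX R SX SY) : stratX R SX SY -> Prop :=
 | Reach0 : Reach s0 s0
 | ReachS s x y : Reach s0 s -> 0 < s [::] x -> Reach s0 (shX s (x, y)).

Lemma reach_prop s0 : behavioralX s0 -> AV phi lam s0 0 -> 0 < lam ->
  forall s, Reach s0 s -> behavioralX s /\ AV phi lam s (vl phi lam y0 s).
Proof.
move=> b0 a0 lp s; elim => [|s1 x y _ [bs avs] sp].
  by split => //; rewrite (AV_val y0 a0).
split; first exact: behX_sh.
exact: (VC hl0 hl1 bs avs lp sp).
Qed.

Lemma val_bound s : behavioralX s -> `|vl phi lam y0 s| <= Kb phi.
Proof.
move=> bs; have hc := val_cvg (phi:=phi) hl0 hl1 (y0:=y0) bs.
rewrite ler_norml; apply/andP; split.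
  apply: (cvgr_to_ge hc); apply: nearW => n.
  by move: (disc_bound phi hl0 hl1 n bs (Ystar_beh R y0)); rewrite ler_norml => /andP[].
apply: (cvgr_to_le hc); apply: nearW => n.
by move: (disc_bound phi hl0 hl1 n bs (Ystar_beh R y0)); rewrite ler_norml => /andP[].
Qed.

Definition Vset s0 := [set c | exists s, Reach s0 s /\ c = vl phi lam y0 s].
Definition Vneg s0 := [set c : R | Vset s0 (- c)].

Lemma near_sup (S : set R) (d : R) : has_ubound S -> S 0 -> 0 < d ->
  exists c, S c /\ sup S - d <= c /\ lam * sup S <= c.
Proof.
move=> hu h0 dp.
have hs : has_sup S by split => //; exists 0.
have M0 : 0 <= sup S by apply: ub_le_sup.
case: (eqVneq (sup S) 0) => hM.
  by exists 0; rewrite hM mulr0; split => //; split => //; lra.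
have Mp : 0 < sup S by rewrite lt_neqAle eq_sym hM.
pose e := Num.min d ((1 - lam) * sup S).
have ep : 0 < e by rewrite lt_min dp mulr_gt0 // subr_gt0.
have [c hc hc2] := sup_adherent ep hs.
exists c; split => //.
have : e <= d by rewrite ge_min lexx.
have : e <= (1 - lam) * sup S by rewrite ge_min lexx orbT.
split; lra.
Qed.


Section WithS0.
Variable s0 : stratX R SX SY.
Hypotheses (b0 : behavioralX s0) (a0 : AV phi lam s0 0) (lp : 0 < lam).

Lemma reach_beh s : Reach s0 s -> behavioralX s.
Proof. by move=> r; case: (reach_prop b0 a0 lp r). Qed.

Lemma V_ub : has_ubound (Vset s0).
Proof.
exists (Kb phi) => c [s [r ->]].
by move: (val_bound (reach_beh r)); rewrite ler_norml => /andP[].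
Qed.

Lemma Vn_ub : has_ubound (Vneg s0).
Proof.
exists (Kb phi) => c [s [r e]].
move: (val_bound (reach_beh r)); rewrite -e ler_norml => /andP[h _]; lra.
Qed.

Lemma V0 : Vset s0 0.
Proof. by exists s0; split; [constructor|rewrite (AV_val y0 a0)]. Qed.

Lemma Vn0 : Vneg s0 0.
Proof. by rewrite /Vneg /= oppr0; apply: V0. Qed.

Definition Mv := sup (Vset s0).
Definition mv := - sup (Vneg s0).

Lemma V_le_M c : Vset s0 c -> c <= Mv.
Proof. by move=> h; apply: ub_le_sup => //; apply: V_ub. Qed.

Lemma V_ge_m c : Vset s0 c -> mv <= c.
Proof.
move=> h; rewrite /mv lerNl; apply: ub_le_sup; first exact: Vn_ub.
by rewrite /Vneg /= opprK.
Qed.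

Lemma KEY s y : Reach s0 s ->
  vl phi lam y0 s - lam * Mv <= (1 - lam) * phiE phi (s [::]) y <= vl phi lam y0 s - lam * mv.
Proof.
move=> r; have [bs avs] := reach_prop b0 a0 lp r.
have e := REC hl0 hl1 y0 y bs avs.
set S := \sum_(x : SX) _ in e.
have hS : mv <= S <= Mv.
  apply/andP; split.
    rewrite -[mv]mul1r -(bs [::]).2 mulr_suml; apply: ler_sum => x _.
    have := (bs [::]).1 x; rewrite le_eqVlt => /orP[/eqP <-|hx]; first by rewrite !mul0r.
    apply: ler_wpM2l; first exact: ltW.
    by apply: V_ge_m; exists (shX s (x, y)); split => //; constructor.
  rewrite -[Mv]mul1r -(bs [::]).2 mulr_suml; apply: ler_sum => x _.
  have := (bs [::]).1 x; rewrite le_eqVlt => /orP[/eqP <-|hx]; first by rewrite !mul0r.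
  apply: ler_wpM2l; first exact: ltW.
  by apply: V_le_M; exists (shX s (x, y)); split => //; constructor.
case/andP: hS => h1 h2.
have e1 : lam * mv <= lam * S by rewrite ler_wpM2l.
have e2 : lam * S <= lam * Mv by rewrite ler_wpM2l.
rewrite e; apply/andP; split; lra.
Qed.


Lemma KEY2 s : Reach s0 s ->
  vl phi lam y0 s - lam * Mv <= (1 - lam) * minY phi (s [::]) /\
  (1 - lam) * maxY phi (s [::]) <= vl phi lam y0 s - lam * mv.
Proof.
move=> r; split.
  have [y ->] := minY_ex phi y0 (s [::]).
  by case/andP: (KEY y r).
have [y ->] := maxY_ex phi y0 (s [::]).
by case/andP: (KEY y r).
Qed.

Lemma PAIR d : 0 < d -> exists sp sm, Reach s0 sp /\ Reach s0 sm /\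
  Mv - d <= vl phi lam y0 sp /\ lam * Mv <= vl phi lam y0 sp /\
  vl phi lam y0 sm <= mv + d /\ vl phi lam y0 sm <= lam * mv.
Proof.
move=> dp.
have [c [[sp [rp ->]] [h1 h2]]] := near_sup V_ub V0 dp.
have [c' [[sm [rm e]] [h3 h4]]] := near_sup Vn_ub Vn0 dp.
exists sp, sm; do 4 split => //; rewrite -e /mv; lra.
Qed.


Lemma plus_of s : Reach s0 s -> lam * Mv <= vl phi lam y0 s -> PhiPlus phi (s [::]).
Proof.
move=> r h; split; first exact: (reach_beh r).
have [k1 _] := KEY2 r.
have mu : 0 < 1 - lam by move: hl1; lra.
by rewrite -(pmulr_rge0 _ mu); move: hl0 hl1; lra.
Qed.

Lemma minus_of s : Reach s0 s -> vl phi lam y0 s <= lam * mv -> PhiMinus phi (s [::]).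
Proof.
move=> r h; split; first exact: (reach_beh r).
have [_ k2] := KEY2 r.
have mu : 0 < 1 - lam by move: hl1; lra.
by rewrite -(pmulr_rle0 _ mu); move: hl0 hl1; lra.
Qed.

Lemma NEC_pos :
  (exists tp, PhiPlus phi tp) /\ (exists tm, PhiMinus phi tm) /\
  ((exists t, PhiPlus phi t /\ PhiMinus phi t) \/
   (~ (exists t, PhiPlus phi t /\ PhiMinus phi t) /\ lambda_min phi <= lam)).
Proof.
have mu : 0 < 1 - lam by move: hl1; lra.
have ll0 := hl0; have ll1 := hl1; have llp := lp.
have [sp [sm [rp [rm [h1 [h2 [h3 h4]]]]]]] := PAIR ltr01.
have Pp := plus_of rp h2; have Pm := minus_of rm h4.
split; first by exists (sp [::]).
split; first by exists (sm [::]).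
case: (pselect (exists t, PhiPlus phi t /\ PhiMinus phi t)) => hI; [by left|right; split => //].
have M0 : 0 <= Mv := V_le_M V0.
have m0 : mv <= 0 := V_ge_m V0.
have Mm : mv < Mv.
  rewrite ltNge; apply/negP => hle; apply: hI; exists (s0 [::]).
  have e0 : vl phi lam y0 s0 = 0 := AV_val y0 a0.
  have hz : forall y, phiE phi (s0 [::]) y = 0.
    move=> y; have := KEY y (Reach0 s0); rewrite e0 => /andP[k1 k2].
    have : (1 - lam) * phiE phi (s0 [::]) y = 0 by nra.
    by move/eqP; rewrite mulf_eq0 (gt_eqF mu) /= => /eqP.
  split; split; try exact: b0.
    by apply: minY_ge => // y; rewrite hz.
  by apply: maxY_le => // y; rewrite hz.
rewrite /lambda_min; set QS := (X in sup X).
have Qub : has_ubound QS.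
  by exists 1 => r [tp [tm [hp [hm ->]]]]; apply: ratio_le1.
have Qin : forall tp tm, PhiPlus phi tp -> PhiMinus phi tm -> Defs.ratio phi tp tm <= sup QS.
  by move=> tp tm hp hm; apply: ub_le_sup => //; exists tp, tm.
have Q0 : 0 <= sup QS := le_trans (ratio_ge0 y0 Pp Pm) (Qin _ _ Pp Pm).
rewrite leNgt; apply/negP => hlt.
set eps := 1 - lam - sup QS.
have ep : 0 < eps by rewrite /eps; lra.
have e1 : eps <= 1 by rewrite /eps; lra.
set d := (1 - lam) * (Mv - mv) * eps / 8.
have dp : 0 < d by rewrite /d; apply: divr_gt0 => //; apply: mulr_gt0 => //; apply: mulr_gt0 => //; lra.
have dle : d <= (1 - lam) * (Mv - mv) / 8.
  rewrite /d ler_pM2r ?invr_gt0 // -[X in _ <= X]mulr1; apply: ler_wpM2l => //.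
  by apply: mulr_ge0; lra.
have [p [q [rp' [rq [g1 [g2 [g3 g4]]]]]]] := PAIR dp.
have Pp' := plus_of rp' g2; have Pq := minus_of rq g4.
have [kA ka] := KEY2 rp'; have [kB kb] := KEY2 rq.
have cpM : vl phi lam y0 p <= Mv by apply: V_le_M; exists p.
have cqm : mv <= vl phi lam y0 q by apply: V_ge_m; exists q.
have hr := Qin _ _ Pp' Pq.
move: hr; rewrite /Defs.ratio.
set A := minY phi (p [::]) in kA *; set a := maxY phi (p [::]) in ka *.
set B := minY phi (q [::]) in kB *; set b := maxY phi (q [::]) in kb *.
set cp := vl phi lam y0 p in g1 g2 kA ka cpM *.
set cq := vl phi lam y0 q in g3 g4 kB kb cqm *.
have hAa : A <= a := minY_le_maxY phi y0 _.
have hBb : B <= b := minY_le_maxY phi y0 _.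
set num := A - b.
have hnum1 : (1 - lam) * num >= (1 - lam) * ((Mv - mv) / 2).
  rewrite /num mulrBr; lra.
have hnum : (Mv - mv) / 2 <= num by rewrite -(ler_pM2l mu).
set D := Num.max _ _.
have hDn : num <= D by rewrite /D le_max /num lerD2r hAa.
have Dp : 0 < D by apply: lt_le_trans hDn; apply: lt_le_trans hnum; lra.
have hmu : (1 - lam) * (num - (1 - lam) * D) >= - 2 * d.
  have ex : D = a - b \/ D = A - B by rewrite /D maxEle; case: ifP => _; [right|left].
  have l1 : (1 - lam) * ((1 - lam) * a) <= (1 - lam) * (cp - lam * mv).
    by apply: ler_wpM2l => //; lra.
  have l2 : lam * ((1 - lam) * b) <= lam * (cq - lam * mv) by apply: ler_wpM2l.
  have l3 : lam * ((1 - lam) * A) >= lam * (cp - lam * Mv) by apply: ler_wpM2l.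
  have l4 : (1 - lam) * ((1 - lam) * B) >= (1 - lam) * (cq - lam * Mv).
    by apply: ler_wpM2l => //; lra.
  have l5 : lam * (cp - Mv + d) >= 0 by apply: mulr_ge0 => //; lra.
  have l6 : lam * (mv - cq + d) >= 0 by apply: mulr_ge0 => //; lra.
  have l7 : lam * d <= d by rewrite -[X in _ <= X]mul1r; apply: ler_wpM2r; lra.
  case: ex => ->; rewrite /num; nra.
have hfin : num / D >= 1 - lam - eps / 2.
  rewrite ler_pdivlMr //.
  have l8 : (1 - lam) * (eps / 2 * D) >= (1 - lam) * (eps / 2 * num).
    by apply: ler_wpM2l; [lra|apply: ler_wpM2l => //; lra].
  have l9 : (1 - lam) * (eps / 2 * num) >= (1 - lam) * (eps / 2 * ((Mv - mv) / 2)).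
    by apply: ler_wpM2l; [lra|apply: ler_wpM2l => //; lra].
  have l10 : (1 - lam) * (num - (1 - lam) * D + eps / 2 * D) >= 0.
    rewrite /d in hmu; nra.
  have : 0 <= num - (1 - lam) * D + eps / 2 * D by rewrite -(pmulr_rge0 _ mu).
  lra.
move=> hr; move: hfin ep; rewrite /eps; lra.
Qed.

End WithS0.


Lemma NEC s0 : behavioralX s0 -> AV phi lam s0 0 ->
  (exists tp, PhiPlus phi tp) /\ (exists tm, PhiMinus phi tm) /\
  ((exists t, PhiPlus phi t /\ PhiMinus phi t) \/
   (~ (exists t, PhiPlus phi t /\ PhiMinus phi t) /\ lambda_min phi <= lam)).
Proof.
move=> b0 a0.
have [lp|l0] : 0 < lam \/ lam = 0.
  by move: hl0; rewrite le_eqVlt => /orP[/eqP ->|->]; [right|left].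
  exact: NEC_pos.
have hz : forall y, phiE phi (s0 [::]) y = 0.
  move=> y; have := REC hl0 hl1 y0 y b0 a0.
  by rewrite l0 mul0r addr0 subr0 mul1r => <-.
have Pp : PhiPlus phi (s0 [::]).
  by split; [exact: b0|apply: minY_ge => // y; rewrite hz].
have Pm : PhiMinus phi (s0 [::]).
  by split; [exact: b0|apply: maxY_le => // y; rewrite hz].
split; first by exists (s0 [::]).
split; first by exists (s0 [::]).
by left; exists (s0 [::]).
Qed.

End Nec.


Section Suff.
Variables (R : realType) (SX SY : finType) (phi : SX -> SY -> R) (lam : R).
Hypotheses (hl0 : 0 <= lam) (hl1 : lam < 1).
Variable y0 : SY.

Lemma phiE0 t : PhiPlus phi t -> PhiMinus phi t -> forall y, phiE phi t y = 0.
Proof.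
move=> [_ h1] [_ h2] y.
have := minY_le phi y0 t y; have := maxY_ge phi y0 t y.
move: h1 h2; lra.
Qed.

Lemma g0_swap (tau : {ffun SX -> R}) (sig : {ffun SY -> R}) :
  g0 phi tau sig = \sum_(y : SY) sig y * phiE phi tau y.
Proof.
rewrite /g0 exchange_big /=; apply: eq_bigr => y _.
rewrite /phiE mulr_sumr; apply: eq_bigr => x _; ring.
Qed.

Lemma SUFF_stat t : PhiPlus phi t -> PhiMinus phi t ->
  exists sX : stratX R SX SY, behavioralX sX /\ autocratic phi lam sX.
Proof.
move=> hp hm; have hz := phiE0 hp hm.
exists (fun _ => t); split; first by move=> h; case: hp.
have st : forall n (sY : stratY R SX SY), stage_payoff phi (fun _ => t) sY n = 0.
  elim=> [|n IH] sY.
    by rewrite stage0 g0_swap big1 // => y _; rewrite hz mulr0.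
  by rewrite stageS big1 // => p _; rewrite IH mulr0.
move=> sY _.
have -> : disc_partial phi lam (fun _ => t) sY = fun _ => 0.
  apply/funext => n; rewrite /disc_partial big1 // => i _.
  by rewrite st mulr0.
exact: cvg_cst.
Qed.


Section Constr.
Variables (tp tm : {ffun SX -> R}).
Hypotheses (hp : PhiPlus phi tp) (hm : PhiMinus phi tm)
  (hr : 1 - lam <= Defs.ratio phi tp tm).

Let A := minY phi tp.
Let a := maxY phi tp.
Let b := maxY phi tm.
Let B := minY phi tm.

Lemma key_ineq : b < A /\ (1 - lam) * a <= A - lam * b /\ b - lam * A <= (1 - lam) * B.
Proof.
have mu : 0 < 1 - lam by move: hl1; lra.
have A0 : 0 <= A by case: hp.
have b0 : b <= 0 by case: hm.
have hAa : A <= a := minY_le_maxY phi y0 tp.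
have hBb : B <= b := minY_le_maxY phi y0 tm.
move: hr; rewrite /Defs.ratio -/A -/a -/b -/B.
set D := Num.max _ _ => hr'.
have hDn : A - b <= D by rewrite /D le_max lerD2r hAa.
have np : 0 < A - b.
  rewrite lt_neqAle subr_ge0 (le_trans b0 A0) andbT; apply/negP => /eqP e.
  by move: hr'; rewrite -e mul0r; move: mu; lra.
have Dp : 0 < D by apply: lt_le_trans hDn.
have hn : (1 - lam) * D <= A - b by rewrite -ler_pdivlMr.
have h1 : a - b <= D by rewrite /D le_max lexx.
have h2 : A - B <= D by rewrite /D le_max lexx orbT.
have h3 : (1 - lam) * (a - b) <= (1 - lam) * D by apply: ler_wpM2l => //; lra.
have h4 : (1 - lam) * (A - B) <= (1 - lam) * D by apply: ler_wpM2l => //; lra.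
split; first lra.
split; lra.
Qed.

Definition alpha v := Num.min 1 (Num.max 0 ((v - b) / (A - b))).
Definition tau v : {ffun SX -> R} := [ffun x => alpha v * tp x + (1 - alpha v) * tm x].

Lemma alpha_in v : 0 <= alpha v <= 1.
Proof.
rewrite /alpha; apply/andP; split.
  by rewrite le_min ler01 le_max lexx.
by rewrite ge_min lexx.
Qed.

Lemma alpha_eq v : b <= v <= A -> alpha v = (v - b) / (A - b).
Proof.
move=> /andP[h1 h2]; have [bA _] := key_ineq.
have d0 : 0 < A - b by lra.
have e0 : 0 <= (v - b) / (A - b) by apply: divr_ge0; lra.
have e1 : (v - b) / (A - b) <= 1 by rewrite ler_pdivrMr // mul1r; lra.
rewrite /alpha (max_idPr e0) (min_idPr e1) //.
Qed.

Lemma tau_dist v : is_dist (tau v).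
Proof.
have /andP[a0 a1] := alpha_in v.
case: hp => [[tp0 tp1] _]; case: hm => [[tm0 tm1] _].
split.
  move=> x; rewrite ffunE; apply: addr_ge0; apply: mulr_ge0 => //; lra.
rewrite (eq_bigr (fun x => alpha v * tp x + (1 - alpha v) * tm x)); last by move=> x _; rewrite ffunE.
by rewrite big_split /= -!mulr_sumr tp1 tm1; ring.
Qed.

Lemma phiE_tau v y : phiE phi (tau v) y = alpha v * phiE phi tp y + (1 - alpha v) * phiE phi tm y.
Proof.
rewrite /phiE !mulr_sumr -big_split /=; apply: eq_bigr => x _; rewrite ffunE; ring.
Qed.

Lemma cond v y : b <= v <= A ->
  v - lam * A <= (1 - lam) * phiE phi (tau v) y <= v - lam * b.
Proof.
move=> hv; have [bA [k1 k2]] := key_ineq.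
have mu : 0 < 1 - lam by move: hl1; lra.
have ll0 := hl0.
have /andP[a0 a1] := alpha_in v.
have ve : v = alpha v * A + (1 - alpha v) * b.
  rewrite alpha_eq //; field; lra.
have p1 : A <= phiE phi tp y := minY_le phi y0 tp y.
have p2 : phiE phi tp y <= a := maxY_ge phi y0 tp y.
have p3 : B <= phiE phi tm y := minY_le phi y0 tm y.
have p4 : phiE phi tm y <= b := maxY_ge phi y0 tm y.
rewrite phiE_tau.
set al := alpha v in a0 a1 ve *.
set f1 := phiE phi tp y in p1 p2 *; set f2 := phiE phi tm y in p3 p4 *.
have q1 : al * ((1 - lam) * A) <= al * ((1 - lam) * f1) by apply: ler_wpM2l => //; apply: ler_wpM2l => //; lra.
have q2 : al * ((1 - lam) * f1) <= al * ((1 - lam) * a) by apply: ler_wpM2l => //; apply: ler_wpM2l => //; lra.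
have q3 : (1 - al) * ((1 - lam) * B) <= (1 - al) * ((1 - lam) * f2) by apply: ler_wpM2l; [lra|apply: ler_wpM2l => //; lra].
have q4 : (1 - al) * ((1 - lam) * f2) <= (1 - al) * ((1 - lam) * b) by apply: ler_wpM2l; [lra|apply: ler_wpM2l => //; lra].
have q5 : al * ((1 - lam) * a) <= al * (A - lam * b) by apply: ler_wpM2l.
have q6 : (1 - al) * (b - lam * A) <= (1 - al) * ((1 - lam) * B) by apply: ler_wpM2l => //; lra.
rewrite ve; apply/andP; split; nra.
Qed.


Section Pos.
Hypothesis lp : 0 < lam.

Definition next v y := (v - (1 - lam) * phiE phi (tau v) y) / lam.

Lemma next_in v y : b <= v <= A -> b <= next v y <= A.
Proof.
move=> hv; have /andP[c1 c2] := cond y hv.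
rewrite /next; apply/andP; split.
  by rewrite ler_pdivlMr //; lra.
by rewrite ler_pdivrMr //; lra.
Qed.

Fixpoint stratF (v : R) (h : seq (SX * SY)) : {ffun SX -> R} :=
  match h with [::] => tau v | p :: h' => stratF (next v p.2) h' end.

Lemma stratF_beh v : behavioralX (stratF v).
Proof. move=> h; elim: h v => [|p h IH] v /=; [exact: tau_dist|exact: IH]. Qed.

Lemma sum_p v (sig : {ffun SY -> R}) (F : SY -> R) :
  \sum_(p : SX * SY) tau v p.1 * sig p.2 * F p.2 = \sum_(y : SY) sig y * F y.
Proof.
transitivity (\sum_(x : SX) \sum_(y : SY) tau v x * sig y * F y).
  by rewrite pair_big /=; apply: eq_bigr => -[x y] _.
transitivity (\sum_(x : SX) tau v x * \sum_(y : SY) sig y * F y).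
  by apply: eq_bigr => x _; rewrite mulr_sumr; apply: eq_bigr => y _; ring.
by rewrite -mulr_suml (tau_dist v).2 mul1r.
Qed.

Lemma v_ident v (sig : {ffun SY -> R}) : is_dist sig ->
  v = (1 - lam) * g0 phi (tau v) sig +
      lam * \sum_(p : SX * SY) tau v p.1 * sig p.2 * next v p.2.
Proof.
move=> ds; rewrite (sum_p v sig (next v)) g0_swap !mulr_sumr -big_split /=.
transitivity (\sum_(y : SY) sig y * v); first by rewrite -mulr_suml ds.2 mul1r.
apply: eq_bigr => y _.
rewrite /next; field; by rewrite gt_eqF.
Qed.

Lemma induct n : forall v (sY : stratY R SX SY), b <= v <= A -> behavioralY sY ->
  lam ^+ n * b <= v - disc_partial phi lam (stratF v) sY n <= lam ^+ n * A.
Proof.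
elim: n => [|n IH] v sY hv bY.
  by rewrite disc0 subr0 expr0 !mul1r.
rewrite discS.
have -> : stratF v [::] = tau v by [].
have e : v - ((1 - lam) * g0 phi (tau v) (sY [::]) +
   lam * \sum_(p : SX * SY) tau v p.1 * sY [::] p.2 *
     disc_partial phi lam (shX (stratF v) p) (shY sY p) n) =
   lam * \sum_(p : SX * SY) tau v p.1 * sY [::] p.2 *
     (next v p.2 - disc_partial phi lam (stratF (next v p.2)) (shY sY p) n).
  rewrite {1}(v_ident v (bY [::])).
  have -> : \sum_(p : SX * SY) tau v p.1 * sY [::] p.2 *
     (next v p.2 - disc_partial phi lam (stratF (next v p.2)) (shY sY p) n) =
     \sum_(p : SX * SY) tau v p.1 * sY [::] p.2 * next v p.2 -
     \sum_(p : SX * SY) tau v p.1 * sY [::] p.2 *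
     disc_partial phi lam (shX (stratF v) p) (shY sY p) n.
    by rewrite -sumrB; apply: eq_bigr => p _; rewrite mulrBr.
  ring.
rewrite e.
have hc := @convex_bound R SX SY (stratF v) sY
  (fun p => next v p.2 - disc_partial phi lam (stratF (next v p.2)) (shY sY p) n)
  (lam ^+ n * b) (lam ^+ n * A) (stratF_beh v) bY
  (fun p => IH _ _ (next_in p.2 hv) (behY_sh p bY)).
move: hc => /andP[c1 c2].
rewrite !exprS -!mulrA; apply/andP; split; apply: ler_wpM2l => //; exact: ltW.
Qed.

Lemma SUFF_pos : exists sX : stratX R SX SY, behavioralX sX /\ autocratic phi lam sX.
Proof.
exists (stratF 0); split; first exact: stratF_beh.
have [bA _] := key_ineq.
have A0 : 0 <= A by case: hp.
have b0 : b <= 0 by case: hm.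
have h0 : b <= 0 <= A by rewrite b0 A0.
move=> sY bY.
have ll1 := hl1.
have lt1 : `|lam| < 1 by rewrite ger0_norm.
apply: (@squeeze_cvgr _ _ _ _ (fun n => - (lam ^+ n * A)) (fun n => - (lam ^+ n * b))).
  apply: nearW => n; have := induct n h0 bY; rewrite sub0r; lra.
  rewrite -[X in _ --> X]oppr0 -[X in _ --> - X](mul0r A).
  apply: cvgN; apply: cvgM; [exact: cvg_expr|exact: cvg_cst].
rewrite -[X in _ --> X]oppr0 -[X in _ --> - X](mul0r b).
apply: cvgN; apply: cvgM; [exact: cvg_expr|exact: cvg_cst].
Qed.

End Pos.

End Constr.

Lemma SUFF tp tm : PhiPlus phi tp -> PhiMinus phi tm -> 1 - lam <= Defs.ratio phi tp tm ->
  exists sX : stratX R SX SY, behavioralX sX /\ autocratic phi lam sX.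
Proof.
move=> hp hm hr.
have [lp|l0] : 0 < lam \/ lam = 0.
  by move: hl0; rewrite le_eqVlt => /orP[/eqP ->|->]; [right|left].
  exact: (SUFF_pos hp hm hr lp).
have A0 : 0 <= minY phi tp by case: hp.
have b0 : maxY phi tm <= 0 by case: hm.
have h0 : maxY phi tm <= 0 <= minY phi tp by rewrite b0 A0.
have hz : forall y, phiE phi (tau tp tm 0) y = 0.
  move=> y; have := cond hp hm hr y h0.
  rewrite l0 !mul0r !subr0 mul1r => /andP[c1 c2]; apply/eqP; rewrite eq_le c1 c2.
  by [].
apply: (@SUFF_stat (tau tp tm 0)).
  split; first exact: tau_dist.
  by apply: minY_ge => // y; rewrite hz.
split; first exact: tau_dist.
by apply: maxY_le => // y; rewrite hz.
Qed.

End Suff.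


Section Comp.
Variables (R : realType) (SX SY : finType) (phi : SX -> SY -> R) (lam : R).
Hypotheses (hl0 : 0 <= lam) (hl1 : lam < 1).
Variable y0 : SY.

Notation VT := 'rV[R]_(#|SX| + #|SX|).

Definition tpv (v : VT) : {ffun SX -> R} := [ffun x => v ord0 (lshift #|SX| (enum_rank x))].
Definition tmv (v : VT) : {ffun SX -> R} := [ffun x => v ord0 (rshift #|SX| (enum_rank x))].

Lemma cont_sum (I : Type) (r : seq I) (F : I -> VT -> R) :
  (forall i, continuous (F i)) -> continuous (fun v => \sum_(i <- r) F i v).
Proof.
move=> h; elim: r => [|i r IH].
  have -> : (fun v => \sum_(i <- [::]) F i v) = fun _ => 0.
    by apply/funext => v; rewrite big_nil.
  by move=> v; apply: cst_continuous.
have -> : (fun v => \sum_(j <- i :: r) F j v) = (fun v => F i v + \sum_(j <- r) F j v).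
  by apply/funext => v; rewrite big_cons.
by move=> v; exact: (continuousD (h i v) (IH v)).
Qed.

Lemma cont_min (r : seq SY) (G : VT -> R) (F : SY -> VT -> R) :
  continuous G -> (forall i, continuous (F i)) ->
  continuous (fun v => \big[Num.min/G v]_(i <- r) F i v).
Proof.
move=> hG h; elim: r => [|i r IH].
  have -> : (fun v => \big[Num.min/G v]_(i <- [::]) F i v) = G.
    by apply/funext => v; rewrite big_nil.
  exact: hG.
have -> : (fun v => \big[Num.min/G v]_(j <- i :: r) F j v) =
  (F i \min (fun v => \big[Num.min/G v]_(j <- r) F j v)).
  by apply/funext => v; rewrite big_cons.
move=> v; exact: (continuous_min (h i v) (IH v)).
Qed.

Lemma cont_max (r : seq SY) (G : VT -> R) (F : SY -> VT -> R) :
  continuous G -> (forall i, continuous (F i)) ->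
  continuous (fun v => \big[Num.max/G v]_(i <- r) F i v).
Proof.
move=> hG h; elim: r => [|i r IH].
  have -> : (fun v => \big[Num.max/G v]_(i <- [::]) F i v) = G.
    by apply/funext => v; rewrite big_nil.
  exact: hG.
have -> : (fun v => \big[Num.max/G v]_(j <- i :: r) F j v) =
  (F i \max (fun v => \big[Num.max/G v]_(j <- r) F j v)).
  by apply/funext => v; rewrite big_cons.
move=> v; exact: (continuous_max (h i v) (IH v)).
Qed.

Lemma cont_tpv x : continuous (fun v => tpv v x).
Proof.
have -> : (fun v => tpv v x) = (fun v : VT => v ord0 (lshift #|SX| (enum_rank x))).
  by apply/funext => v; rewrite ffunE.
exact: coord_continuous.
Qed.

Lemma cont_tmv x : continuous (fun v => tmv v x).
Proof.
have -> : (fun v => tmv v x) = (fun v : VT => v ord0 (rshift #|SX| (enum_rank x))).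
  by apply/funext => v; rewrite ffunE.
exact: coord_continuous.
Qed.

Lemma cont_phiE (f : VT -> {ffun SX -> R}) :
  (forall x, continuous (fun v => f v x)) -> forall y, continuous (fun v => phiE phi (f v) y).
Proof.
move=> hf y; rewrite /phiE; apply: (cont_sum (F := fun x v => f v x * phi x y)) => x v.
apply: (continuousM (s := fun v => f v x) (t := fun=> phi x y)); [exact: hf|exact: cst_continuous].
Qed.

Lemma cont_minY (f : VT -> {ffun SX -> R}) :
  (forall x, continuous (fun v => f v x)) -> continuous (fun v => minY phi (f v)).
Proof.
move=> hf; rewrite /minY; have [y1 ->] := pickY y0.
apply: (cont_min (G := fun v => phiE phi (f v) y1) (F := fun y v => phiE phi (f v) y)).
  exact: cont_phiE.
by move=> y; apply: cont_phiE.
Qed.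

Lemma cont_maxY (f : VT -> {ffun SX -> R}) :
  (forall x, continuous (fun v => f v x)) -> continuous (fun v => maxY phi (f v)).
Proof.
move=> hf; rewrite /maxY; have [y1 ->] := pickY y0.
apply: (cont_max (G := fun v => phiE phi (f v) y1) (F := fun y v => phiE phi (f v) y)).
  exact: cont_phiE.
by move=> y; apply: cont_phiE.
Qed.


Definition Dm (tp tm : {ffun SX -> R}) :=
  Num.max (maxY phi tp - maxY phi tm) (minY phi tp - minY phi tm).
Definition gp (tp tm : {ffun SX -> R}) :=
  (minY phi tp - maxY phi tm) - (1 - lam) * Dm tp tm.
Definition gv (v : VT) := gp (tpv v) (tmv v).

Lemma cont_gv : continuous gv.
Proof.
have c1 := cont_minY cont_tpv; have c2 := cont_maxY cont_tpv.
have c3 := cont_minY cont_tmv; have c4 := cont_maxY cont_tmv.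
move=> v; rewrite /gv /gp /Dm.
apply: (continuousB (f := fun v => minY phi (tpv v) - maxY phi (tmv v))).
  exact: (continuousB (c1 v) (c4 v)).
apply: (continuousM (s := fun=> 1 - lam)); first exact: cst_continuous.
apply: (continuous_max (f := fun v => maxY phi (tpv v) - maxY phi (tmv v))
                       (g := fun v => minY phi (tpv v) - minY phi (tmv v))).
  exact: (continuousB (c2 v) (c4 v)).
exact: (continuousB (c1 v) (c3 v)).
Qed.

Definition Kset : set VT := [set v | PhiPlus phi (tpv v) /\ PhiMinus phi (tmv v)].

Lemma closed_pre (f : VT -> R) (D : set R) : continuous f -> closed D -> closed (f @^-1` D).
Proof. by move=> cf cD; apply: preimage_closed => // x _; apply: cf. Qed.

Lemma Kset_closed : closed Kset.
Proof.
have -> : Kset =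
  (\bigcap_(x in [set: SX]) ((fun v => tpv v x) @^-1` [set r | 0 <= r])) `&`
  (\bigcap_(x in [set: SX]) ((fun v => tmv v x) @^-1` [set r | 0 <= r])) `&`
  ((fun v => \sum_(x : SX) tpv v x) @^-1` [set r | r = 1]) `&`
  ((fun v => \sum_(x : SX) tmv v x) @^-1` [set r | r = 1]) `&`
  ((fun v => minY phi (tpv v)) @^-1` [set r | 0 <= r]) `&`
  ((fun v => maxY phi (tmv v)) @^-1` [set r | r <= 0]).
  apply/seteqP; split => v /=.
    move=> [[[h1 h2] h3] [[h4 h5] h6]].
    split; first split; first split; first split; first split.
    - by move=> x _; apply: h1.
    - by move=> x _; apply: h4.
    - by [].
    - by [].
    - by [].
    - by [].
  move=> [[[[[h1 h2] h3] h4] h5] h6]; split; split => //; split => // x.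
    exact: h1.
  exact: h2.
apply: closedI; first apply: closedI; first apply: closedI; first apply: closedI;
  first apply: closedI.
- by apply: closed_bigI => x _; apply: closed_pre; [exact: cont_tpv|exact: closed_ge].
- by apply: closed_bigI => x _; apply: closed_pre; [exact: cont_tmv|exact: closed_ge].
- apply: closed_pre; last exact: closed_eq.
  by apply: (cont_sum (F := fun x v => tpv v x)) => x; exact: cont_tpv.
- apply: closed_pre; last exact: closed_eq.
  by apply: (cont_sum (F := fun x v => tmv v x)) => x; exact: cont_tmv.
- by apply: closed_pre; [exact: (cont_minY cont_tpv)|exact: closed_ge].
- by apply: closed_pre; [exact: (cont_maxY cont_tmv)|exact: closed_le].
Qed.


Lemma Kset_compact : compact Kset.
Proof.
have hc : compact [set v : VT | forall i, `[(0:R), 1]%classic (v ord0 i)].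
  exact: (rV_compact (fun _ : 'I_(#|SX| + #|SX|) => @segment_compact R 0 1)).
apply: (subclosed_compact Kset_closed hc).
move=> v [[dp _] [dm _]] i /=.
rewrite -(splitK i); case: (fintype.split i) => j /=; rewrite in_itv /=.
  have -> : v ord0 (lshift #|SX| j) = tpv v (enum_val j) by rewrite ffunE enum_valK.
  by rewrite (dp.1 _) (dist_le1 dp).
have -> : v ord0 (rshift #|SX| j) = tmv v (enum_val j) by rewrite ffunE enum_valK.
by rewrite (dm.1 _) (dist_le1 dm).
Qed.

Definition embed (tp tm : {ffun SX -> R}) : VT :=
  row_mx (\row_(j < #|SX|) tp (enum_val j)) (\row_(j < #|SX|) tm (enum_val j)).

Lemma tpv_embed tp tm : tpv (embed tp tm) = tp.
Proof. by apply/ffunP => x; rewrite ffunE row_mxEl mxE enum_rankK. Qed.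
Lemma tmv_embed tp tm : tmv (embed tp tm) = tm.
Proof. by apply/ffunP => x; rewrite ffunE row_mxEr mxE enum_rankK. Qed.

Lemma phiE_bound tau y : is_dist tau -> `|phiE phi tau y| <= Kb phi.
Proof.
move=> dt; rewrite /phiE /Kb; apply: (le_trans (ler_norm_sum _ _ _)).
apply: ler_sum => x _; rewrite normrM.
apply: (@le_trans _ _ `|phi x y|).
  rewrite -[X in _ <= X]mul1r; apply: ler_wpM2r => //.
  by rewrite ger0_norm ?(dt.1 x) //; apply: dist_le1.
by rewrite (bigD1 y) //= lerDl; apply: sumr_ge0.
Qed.

Lemma Dm_pos tp tm : PhiPlus phi tp -> PhiMinus phi tm ->
  ~ (exists t, PhiPlus phi t /\ PhiMinus phi t) -> 0 < Dm tp tm.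
Proof.
move=> hp hm hI; rewrite /Dm lt_max; apply/orP; left.
rewrite subr_gt0 ltNge; apply/negP => h; apply: hI; exists tp; split => //.
split; first by case: hp.
by apply: le_trans h _; case: hm.
Qed.

Lemma Dm_le tp tm : is_dist tp -> is_dist tm -> Dm tp tm <= Kb phi + Kb phi.
Proof.
move=> dp dm; rewrite /Dm ge_max.
have [y1 e1] := maxY_ex phi y0 tp; have [y2 e2] := maxY_ex phi y0 tm.
have [y3 e3] := minY_ex phi y0 tp; have [y4 e4] := minY_ex phi y0 tm.
have := phiE_bound y1 dp; have := phiE_bound y2 dm.
have := phiE_bound y3 dp; have := phiE_bound y4 dm.
rewrite -e1 -e2 -e3 -e4 !ler_norml => /andP[a1 a2] /andP[a3 a4] /andP[a5 a6] /andP[a7 a8].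
apply/andP; split; lra.
Qed.


Lemma COMP : (exists tp, PhiPlus phi tp) -> (exists tm, PhiMinus phi tm) ->
  ~ (exists t, PhiPlus phi t /\ PhiMinus phi t) -> lambda_min phi <= lam ->
  exists tp tm, PhiPlus phi tp /\ PhiMinus phi tm /\ 1 - lam <= Defs.ratio phi tp tm.
Proof.
move=> [tp0 hp0] [tm0 hm0] hI hlm.
have ll0 := hl0; have ll1 := hl1.
have mu : 0 < 1 - lam by lra.
have K0 : Kset (embed tp0 tm0) by rewrite /Kset /= tpv_embed tmv_embed.
have [c cK cmax] := EVT_max_rV (ex_intro _ _ K0) Kset_compact (@continuous_subspaceT _ _ Kset gv cont_gv).
rewrite in_setE in cK; case: cK => cp cm.
case: (leP 0 (gv c)) => hg.
  exists (tpv c), (tmv c); split => //; split => //.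
  have Dp := Dm_pos cp cm hI.
  rewrite /Defs.ratio -/(Dm _ _) ler_pdivlMr //.
  by move: hg; rewrite /gv /gp; lra.
exfalso.
move: hlm; rewrite /lambda_min; set QS := (X in sup X) => hlm.
set K1 := Kb phi + Kb phi + 1.
have Kb0 : 0 <= Kb phi by apply: sumr_ge0 => x _; apply: sumr_ge0.
have K1p : 0 < K1 by rewrite /K1; lra.
have hub : forall r, QS r -> r <= 1 - lam + gv c / K1.
  move=> r [tp [tm [hp [hm ->]]]].
  have vK : Kset (embed tp tm) by rewrite /Kset /= tpv_embed tmv_embed.
  have := cmax (embed tp tm); rewrite in_setE => /(_ vK).
  rewrite /gv /gp tpv_embed tmv_embed => hle.
  have Dp := Dm_pos hp hm hI.
  have DK : Dm tp tm <= K1.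
    by apply: le_trans (Dm_le hp.1 hm.1) _; rewrite /K1 lerDl.
  rewrite /Defs.ratio -/(Dm _ _) ler_pdivrMr //.
  have h1 : gv c <= gv c / K1 * Dm tp tm.
    have e : gv c / K1 * Dm tp tm - gv c = (- gv c) * (K1 - Dm tp tm) / K1.
      by field; rewrite gt_eqF.
    rewrite -subr_ge0 e; apply: divr_ge0; last exact: ltW.
    by apply: mulr_ge0; lra.
  move: hle h1; rewrite /gv /gp; nra.
have hsup : sup QS <= 1 - lam + gv c / K1.
  apply: ge_sup; last exact: hub.
  by exists (Defs.ratio phi tp0 tm0), tp0, tm0.
have : gv c / K1 < 0 by rewrite pmulr_llt0 ?invr_gt0.
lra.
Qed.

End Comp.


End Helpers.

Theorem proposition4 (R : realType) (SX SY : finType)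
    (hX : (0 < #|SX|)%N) (hY : (0 < #|SY|)%N)
    (phi : SX -> SY -> R) (lam : R) (hl0 : 0 <= lam) (hl1 : lam < 1) :
  (exists sX : stratX R SX SY, behavioralX sX /\ autocratic phi lam sX) <->
  ((exists tp, PhiPlus phi tp) /\ (exists tm, PhiMinus phi tm) /\
   ((exists t, PhiPlus phi t /\ PhiMinus phi t) \/
    (~ (exists t, PhiPlus phi t /\ PhiMinus phi t) /\ lambda_min phi <= lam))).
Proof.
have /card_gt0P [y0 _] := hY.
split.
  by move=> [sX [bX aX]]; exact: (NEC hl0 hl1 y0 bX aX).
move=> [hp [hm [[t [htp htm]]|[hI hlm]]]].
  exact: (SUFF_stat lam y0 htp htm).
have [tp [tm [hp' [hm' hr]]]] := COMP hl0 hl1 y0 hp hm hI hlm.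
exact: (SUFF hl0 hl1 y0 hp' hm' hr).
Qed.
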